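(* Let $S$ be a numerical semigroup and $m\in\mathbb{N}$, and suppose the set of gaps $\mathrm{H}(S)$ is equidistributed modulo $m$. Then $m\in S$ if and only if $\mathrm{g}(S)=0$.
   Context: A numerical semigroup is a submonoid $S$ of $(\mathbb{N}_0,+)$ with finite complement; $\mathrm{H}(S)=\mathbb{N}_0\setminus S$ is its set of gaps and $\mathrm{g}(S)=\#\mathrm{H}(S)$ its genus. A finite set $B\subset\mathbb{Z}$ is equidistributed modulo $m$ if for all $r_1,r_2\in\{1,\dots,m\}$ the number of elements of $B$ congruent to $r_1$ modulo $m$ equals the number of elements of $B$ congruent to $r_2$ modulo $m$. *)

(* Defs.v *)
From mathcomp Require Import all_boot.
Set Implicit Arguments. Unset Strict Implicit. Unset Printing Implicit Defensive.

Definition numerical_semigroup (S : pred nat) : Prop :=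
  [/\ 0 \in S,
      (forall a b, a \in S -> b \in S -> a + b \in S) &
      exists N, forall n, N <= n -> n \in S].

(* If every n >= N lies in S, the gap set H(S) is exactly the list of       *)
(* n < N with n \notin S (listed without repetition, increasing).           *)
Definition gaps_below (S : pred nat) (N : nat) : seq nat :=
  [seq n <- iota 0 N | n \notin S].

Definition equidistributed (B : seq nat) (m : nat) : Prop :=
  forall r1 r2, 1 <= r1 <= m -> 1 <= r2 <= m ->
    count (fun x => x %% m == r1 %% m) B = count (fun x => x %% m == r2 %% m) B.

(* Main.v *)
Require Import Defs.
From mathcomp Require Import all_boot.

Theorem mainTheorem2 (S : pred nat) (m N : nat) :
  numerical_semigroup S ->
  0 < m ->
  (forall n, N <= n -> n \in S) ->
  equidistributed (gaps_below S N) m ->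
  (m \in S <-> size (gaps_below S N) = 0).
Proof.
move=> [S0 Sadd _] m0 HN Heq; split; last first.
  move/eqP; rewrite size_eq0 => /eqP H.
  have [/HN //|lt] := leqP N m.
  apply/negPn/negP => nm.
  have : m \in gaps_below S N by rewrite mem_filter nm mem_iota.
  by rewrite H.
move=> Sm.
have mult : forall k, k * m \in S.
  elim=> [|k IH]; first by rewrite mul0n.
  by rewrite mulSn addnC; apply: Sadd.
have nz : forall x, x \in gaps_below S N -> x %% m != 0.
  move=> x; rewrite mem_filter => /andP [xS _]; apply/negP => /eqP x0.
  move: xS; rewrite (divn_eq x m) x0 addn0 mult //.
have c0 : count (fun x => x %% m == m %% m) (gaps_below S N) = 0.
  rewrite modnn; apply/eqP; rewrite -leqn0 leqNgt -has_count.
  by apply/hasP => [[x xin /eqP xe]]; move: (nz x xin); rewrite xe.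
apply/eqP; rewrite size_eq0; apply/eqP.
case E: (gaps_below S N) => [|g s] //.
have gin : g \in gaps_below S N by rewrite E mem_head.
have r1 : 1 <= g %% m <= m.
  by rewrite lt0n nz // ltnW // ltn_pmod.
have := Heq (g %% m) m r1; rewrite lt0n (gtn_eqF m0) leqnn c0 => /(_ isT).
move=> /eqP; rewrite -leqn0 leqNgt -has_count => /negP H; exfalso; apply: H.
by apply/hasP; exists g; rewrite // modn_mod.
Qed.
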